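(* Let $X\sim\mathsf{Bernoulli}(p)$ (i.e. $\Pr(X=1)=p$) with $p\in[\frac12,1)$, and let $Y\in\{0,1\}$ be obtained from $X$ through the binary channel $P_{Y|X}=\mathsf{BIBO}(\alpha,\beta)$, i.e. $P_{Y|X}(\cdot|0)=(\bar\alpha,\alpha)$ and $P_{Y|X}(\cdot|1)=(\beta,\bar\beta)$, with $\alpha,\beta\in[0,\frac12)$ and $\bar\alpha\bar p>\beta p$. Let $q=\Pr(Y=1)=\alpha\bar p+\bar\beta p$ and for $\varepsilon$ define $$\zeta(\varepsilon)=\frac{\bar\alpha\bar p+\bar\beta p-\varepsilon}{\bar\beta p-\alpha\bar p},\qquad \tilde\zeta(\varepsilon)=\frac{\bar\alpha\bar p+\bar\beta p-\varepsilon}{\bar\alpha\bar p-\beta p}.$$ Then for every $\varepsilon\in[p,\bar\alpha\bar p+\bar\beta p]=[\mathsf{P}_{\mathsf{c}}(X),\mathsf{P}_{\mathsf{c}}(X|Y)]$, $$\mathcal{h}(\varepsilon)=\begin{cases}1-\zeta(\varepsilon)q, & \alpha\bar\alpha\bar p^2<\beta\bar\beta p^2,\\ 1-\tilde\zeta(\varepsilon)\bar q, & \alpha\bar\alpha\bar p^2\ge\beta\bar\beta p^2.\end{cases}$$ Furthermore, when $\alpha\bar\alpha\bar p^2<\beta\bar\beta p^2$ the Z-channel $P_{Z|Y}$ on $\{0,1\}$ given by $P_{Z|Y}(0|0)=1$, $P_{Z|Y}(0|1)=\zeta(\varepsilon)$, $P_{Z|Y}(1|1)=1-\zeta(\varepsilon)$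 achieves $\mathcal{h}(\varepsilon)$ (i.e. satisfies $\mathsf{P}_{\mathsf{c}}(X|Z)\le\varepsilon$ and $\mathsf{P}_{\mathsf{c}}(Y|Z)=\mathcal{h}(\varepsilon)$), and when $\alpha\bar\alpha\bar p^2\ge\beta\bar\beta p^2$ the reverse Z-channel $P_{Z|Y}(0|0)=1-\tilde\zeta(\varepsilon)$, $P_{Z|Y}(1|0)=\tilde\zeta(\varepsilon)$, $P_{Z|Y}(1|1)=1$ achieves $\mathcal{h}(\varepsilon)$.
   Context: For $a\in[0,1]$, $\bar a=1-a$. For discrete random variables, $\mathsf{P}_{\mathsf{c}}(X)=\max_x P_X(x)$ and $\mathsf{P}_{\mathsf{c}}(X|Z)=\sum_z\max_x P_{XZ}(x,z)$. The privacy-constrained guessing function is $\mathcal{h}(\varepsilon)=\sup\{\mathsf{P}_{\mathsf{c}}(Y|Z): P_{Z|Y},\ X - Y - Z,\ \mathsf{P}_{\mathsf{c}}(X|Z)\le\varepsilon\}$, the supremum being over all channels $P_{Z|Y}$ into finite alphabets with $X - Y - Z$ a Markov chain. *)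

(* Defs.v *)
From HB Require Import structures.
From mathcomp Require Import all_boot all_order all_algebra.
From mathcomp Require Import reals.
Set Implicit Arguments. Unset Strict Implicit. Unset Printing Implicit Defensive.
Import Order.TTheory GRing.Theory Num.Theory.
Local Open Scope ring_scope.

Section Defs.
Variable R : realType.

(* V : A -> B -> R is a channel (stochastic matrix) P_{B|A}. *)
Definition stochastic (A B : finType) (V : A -> B -> R) : Prop :=
  (forall a b, 0 <= V a b) /\ (forall a, \sum_(b : B) V a b = 1).

(* Correct-guess probability of the first component given the second,
   from a joint distribution P_{AB}:  P_c(A|B) = sum_b max_a P_{AB}(a,b). *)
Definition Pc_cond (A B : finType) (P : A -> B -> R) : R :=
  \sum_(b : B) \big[Num.max/0]_(a : A) P a b.

(* Joint laws induced by X - Y - Z with P_{Z|Y} = V. *)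
Definition PXZ (X Y Z : finType) (PXY : X -> Y -> R) (V : Y -> Z -> R) :=
  fun x z => \sum_(y : Y) PXY x y * V y z.
Definition PYZ (X Y Z : finType) (PXY : X -> Y -> R) (V : Y -> Z -> R) :=
  fun y z => (\sum_(x : X) PXY x y) * V y z.

Definition feasible_val (X Y : finType) (PXY : X -> Y -> R) (eps v : R) : Prop :=
  exists (Z : finType) (V : Y -> Z -> R),
    stochastic V /\ Pc_cond (PXZ PXY V) <= eps /\ Pc_cond (PYZ PXY V) = v.

Definition is_sup (S : R -> Prop) (v : R) : Prop :=
  (forall u, S u -> u <= v) /\ (forall w, (forall u, S u -> u <= w) -> v <= w).

Definition h_is (X Y : finType) (PXY : X -> Y -> R) (eps v : R) : Prop :=
  is_sup (feasible_val PXY eps) v.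

Definition bern (p : R) (x : bool) : R := if x then p else 1 - p.

Definition bibo (a b : R) (x y : bool) : R :=
  if x then (if y then 1 - b else b) else (if y then a else 1 - a).

Definition PXY_bibo (p a b : R) : bool -> bool -> R :=
  fun x y => bern p x * bibo a b x y.

Definition zchan (z : R) (y w : bool) : R :=
  if y then (if w then 1 - z else z) else (if w then 0 else 1).

Definition rzchan (z : R) (y w : bool) : R :=
  if y then (if w then 1 else 0) else (if w then z else 1 - z).

End Defs.

(* Main.v *)
Require Import Defs.
From HB Require Import structures.
From mathcomp Require Import all_boot all_order all_algebra.
From mathcomp Require Import reals.
From mathcomp Require Import lra.
Import Order.TTheory GRing.Theory Num.Theory.
Local Open Scope ring_scope.

Lemma bmax_bool (R : realType) (F : bool -> R) :
  \big[Num.max/0]_(a : bool) F a = Num.max (F true) (Num.max (F false) 0).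
Proof. by rewrite -big_filter /index_enum !unlock. Qed.

Lemma ub_gen (R : realType) (Z : finType) (V : bool -> Z -> R) (P : bool -> bool -> R) (lam c0 c1 : R) :
  stochastic V ->
  (forall a b M, 0 <= a -> 0 <= b ->
     P false true * b + P false false * a <= M ->
     P true true * b + P true false * a <= M ->
     Num.max ((P true true + P false true) * b)
        (Num.max ((P true false + P false false) * a) 0) <= lam * M + c0 * a + c1 * b) ->
  Pc_cond (PYZ P V) <= lam * Pc_cond (PXZ P V) + c0 + c1.
Proof.
move=> [V0 V1] H; rewrite /Pc_cond.
have -> : c0 = \sum_z c0 * V false z by rewrite -mulr_sumr V1 mulr1.
have -> : c1 = \sum_z c1 * V true z by rewrite -mulr_sumr V1 mulr1.
rewrite mulr_sumr -!big_split /=; apply: ler_sum => z _.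
rewrite !bmax_bool /PYZ /PXZ !big_bool /=.
apply: H => //.
- by rewrite le_max [X in _ || X]le_max lexx orbT.
- by rewrite le_max lexx.
Qed.

Lemma maxA3 (R : realType) (A B : R) : B <= A -> 0 <= A -> Num.max A (Num.max B 0) = A.
Proof. by move=> h1 h2; case: (lerP B 0) => h3; case: lerP => h4 //; lra. Qed.
Lemma maxB3 (R : realType) (A B : R) : A <= B -> 0 <= B -> Num.max A (Num.max B 0) = B.
Proof. by move=> h1 h2; case: (lerP B 0) => h3; case: lerP => h4 //; lra. Qed.

Lemma pos_div (R : realType) (x D : R) : 0 < D -> 0 <= x * D -> 0 <= x.
Proof. by move=> hD; rewrite pmulr_lge0. Qed.
Arguments pos_div {R x D}.

Lemma case1 (R : realType) (p a b e z : R) :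
  2^-1 <= p -> p < 1 ->
  0 <= a -> a < 2^-1 -> 0 <= b -> b < 2^-1 ->
  b * p < (1 - a) * (1 - p) ->
  p <= e -> e <= (1 - a) * (1 - p) + (1 - b) * p ->
  z * ((1 - b) * p - a * (1 - p)) = (1 - a) * (1 - p) + (1 - b) * p - e ->
  a * (1 - a) * (1 - p) ^+ 2 < b * (1 - b) * p ^+ 2 ->
  let q := a * (1 - p) + (1 - b) * p in
  let PXY := PXY_bibo p a b in
     h_is PXY e (1 - z * q) /\
     stochastic (zchan z) /\
     Pc_cond (PXZ PXY (zchan z)) <= e /\
     Pc_cond (PYZ PXY (zchan z)) = 1 - z * q.
Proof.
move=> hp1 hp2 ha1 ha2 hb1 hb2 hD2 he1 he2 hz hc q PXY.
have h1p : 0 <= 1 - p by lra.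
have hp0 : 0 <= p by lra.
have h1a : 0 <= 1 - a by lra.
have h1b : 0 <= 1 - b by lra.
set D1 := (1 - b) * p - a * (1 - p) in hz.
set N := (1 - a) * (1 - p) + (1 - b) * p - e in hz.
set E := (1 - a) * (1 - p) - b * p.
set r0 := (1 - a) * (1 - p) + b * p.
have hD1 : 0 < D1 by rewrite /D1; lra.
have hq0 : 0 <= q by rewrite /q; have := mulr_ge0 ha1 h1p; have := mulr_ge0 h1b hp0; lra.
have hr0 : 0 <= r0 by rewrite /r0; have := mulr_ge0 h1a h1p; have := mulr_ge0 hb1 hp0; lra.
have hcond : q * E <= r0 * D1.
  by move: hc; rewrite /q /E /r0 /D1 !expr2; lra.
have hz0 : 0 <= z by apply: (pos_div hD1); rewrite hz /N; lra.
have hz1 : 0 <= 1 - z by apply: (pos_div hD1); rewrite mulrBl mul1r hz /N /D1; lra.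
have hzE : z * D1 <= E by rewrite hz /N /E; lra.
have hqz : 0 <= r0 - q * z.
  apply: (pos_div hD1).
  have : q * (z * D1) <= q * E by apply: ler_wpM2l.
  rewrite mulrBl -mulrA; lra.
have hPXZ : Pc_cond (PXZ PXY (zchan z)) = e.
  rewrite /Pc_cond big_bool !bmax_bool /PXZ !big_bool /PXY /PXY_bibo /bern /bibo /zchan /=.
  rewrite maxA3; last first.
  - by rewrite !mulr0 !addr0; apply: mulr_ge0 => //; apply: mulr_ge0.
  - rewrite !mulr0 !addr0. have := mulr_ge0 (ltW hD1) hz1. rewrite /D1. lra.
  rewrite maxB3; last first.
  - rewrite !mulr1. have := mulr_ge0 (mulr_ge0 h1p ha1) hz0. have := mulr_ge0 h1p h1a. lra.
  - move: hzE; rewrite /D1 /E !mulr1. lra.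
  rewrite !mulr0 !mulr1 !addr0. move: hz; rewrite /D1 /N. lra.
have hPYZ : Pc_cond (PYZ PXY (zchan z)) = 1 - z * q.
  rewrite /Pc_cond big_bool !bmax_bool /PYZ !big_bool /PXY /PXY_bibo /bern /bibo /zchan /=.
  rewrite maxA3; last first.
  - have := mulr_ge0 hq0 hz1; rewrite /q; lra.
  - rewrite !mulr0; have := mulr_ge0 hq0 hz1; rewrite /q; lra.
  rewrite maxB3; last first.
  - rewrite !mulr1; move: hr0; rewrite /r0; lra.
  - rewrite !mulr1; move: hqz; rewrite /r0 /q; lra.
  rewrite !mulr1; rewrite /q; lra.
have hst : stochastic (zchan z).
  split; first by case; case => /=; lra.
  by case; rewrite big_bool /=; lra.
split; last by split => //; split => //; rewrite hPXZ.
split.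
- move=> u [Z [V [hV [hX hY]]]]; rewrite -hY.
  pose lam := q / D1.
  have hl : lam * D1 = q by rewrite /lam divfK // gt_eqF.
  have hl0 : 0 <= lam by rewrite /lam divr_ge0 // ltW.
  have hlE : 0 <= r0 - lam * E.
    apply: (pos_div hD1).
    have : lam * D1 * E <= r0 * D1 by rewrite hl.
    rewrite mulrBl; lra.
  apply: le_trans (@ub_gen _ _ _ _ lam (r0 - lam * ((1 - p) * (1 - a))) (- (lam * ((1 - p) * a))) hV _) _.
  + move=> x y M hx hy hM0 hM1.
    rewrite /PXY /PXY_bibo /bern /bibo /= in hM0 hM1 *.
    rewrite !ge_max; apply/andP; split; last (apply/andP; split).
    * have : 0 <= lam * (M - ((1 - p) * a * y + (1 - p) * (1 - a) * x)) by apply: mulr_ge0 => //; lra.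
      have : 0 <= lam * (M - (p * (1 - b) * y + p * b * x)) by apply: mulr_ge0 => //; lra.
      have := mulr_ge0 hlE hx.
      have : lam * D1 * y = q * y by rewrite hl.
      rewrite /D1 /E /q. lra.
    * have : 0 <= lam * (M - ((1 - p) * a * y + (1 - p) * (1 - a) * x)) by apply: mulr_ge0 => //; lra.
      rewrite /r0. lra.
    * have : 0 <= lam * (M - ((1 - p) * a * y + (1 - p) * (1 - a) * x)) by apply: mulr_ge0 => //; lra.
      have := mulr_ge0 hr0 hx.
      rewrite /r0. lra.
  have := ler_wpM2l hl0 hX.
  have : z * q = lam * N by rewrite -hl -hz mulrCA.
  move: hl; rewrite /N /D1 /r0 /q.
  lra.
- move=> w hw; apply: hw.
  by exists bool, (zchan z); split => //; split => //; rewrite hPXZ.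
Qed.

Lemma case2 (R : realType) (p a b e z : R) :
  2^-1 <= p -> p < 1 ->
  0 <= a -> a < 2^-1 -> 0 <= b -> b < 2^-1 ->
  b * p < (1 - a) * (1 - p) ->
  p <= e -> e <= (1 - a) * (1 - p) + (1 - b) * p ->
  z * ((1 - a) * (1 - p) - b * p) = (1 - a) * (1 - p) + (1 - b) * p - e ->
  b * (1 - b) * p ^+ 2 <= a * (1 - a) * (1 - p) ^+ 2 ->
  let q := a * (1 - p) + (1 - b) * p in
  let PXY := PXY_bibo p a b in
     h_is PXY e (1 - z * (1 - q)) /\
     stochastic (rzchan z) /\
     Pc_cond (PXZ PXY (rzchan z)) <= e /\
     Pc_cond (PYZ PXY (rzchan z)) = 1 - z * (1 - q).
Proof.
move=> hp1 hp2 ha1 ha2 hb1 hb2 hD2 he1 he2 hz hc q PXY.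
have h1p : 0 <= 1 - p by lra.
have hp0 : 0 <= p by lra.
have h1a : 0 <= 1 - a by lra.
have h1b : 0 <= 1 - b by lra.
set D2 := (1 - a) * (1 - p) - b * p in hz hD2.
set N := (1 - a) * (1 - p) + (1 - b) * p - e in hz.
set D1 := (1 - b) * p - a * (1 - p).
set r0 := (1 - a) * (1 - p) + b * p.
have hD2' : 0 < D2 by rewrite /D2; lra.
have hD1 : 0 < D1 by move: hD2'; rewrite /D1 /D2; lra.
have hq0 : 0 <= q by rewrite /q; have := mulr_ge0 ha1 h1p; have := mulr_ge0 h1b hp0; lra.
have hr0 : 0 <= r0 by rewrite /r0; have := mulr_ge0 h1a h1p; have := mulr_ge0 hb1 hp0; lra.
have hrq : r0 = 1 - q by rewrite /r0 /q; lra.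
have hcond : r0 * D1 <= q * D2.
  by move: hc; rewrite /q /D2 /r0 /D1 !expr2; lra.
have hz0 : 0 <= z by apply: (pos_div hD2'); rewrite hz /N; lra.
have hz1 : 0 <= 1 - z by apply: (pos_div hD2'); rewrite mulrBl mul1r hz /N /D2; lra.
have hzE : z * D2 <= D2 by rewrite hz /N /D2; lra.
have hqz : 0 <= q - r0 * z.
  apply: (pos_div hD2').
  have : r0 * (z * D2) <= r0 * D2 by apply: ler_wpM2l.
  have : r0 * D2 <= r0 * D1 by apply: ler_wpM2l => //; rewrite /D1 /D2; lra.
  rewrite mulrBl -mulrA; lra.
have hPXZ : Pc_cond (PXZ PXY (rzchan z)) = e.
  rewrite /Pc_cond big_bool !bmax_bool /PXZ !big_bool /PXY /PXY_bibo /bern /bibo /rzchan /=.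
  rewrite maxA3; last first.
  - rewrite !mulr1. have := mulr_ge0 (mulr_ge0 hp0 hb1) hz0. have := mulr_ge0 hp0 h1b. lra.
  - move: hzE hD1; rewrite /D1 /D2 !mulr1. lra.
  rewrite maxB3; last first.
  - by rewrite !mulr0 !add0r; apply: mulr_ge0 => //; apply: mulr_ge0.
  - rewrite !mulr0 !add0r. have := mulr_ge0 (ltW hD2') hz1. rewrite /D2. lra.
  rewrite !mulr0 !mulr1 !add0r. move: hz; rewrite /D2 /N. lra.
have hPYZ : Pc_cond (PYZ PXY (rzchan z)) = 1 - z * (1 - q).
  rewrite /Pc_cond big_bool !bmax_bool /PYZ !big_bool /PXY /PXY_bibo /bern /bibo /rzchan /=.
  rewrite maxA3; last first.
  - rewrite !mulr1; move: hq0; rewrite /q; lra.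
  - rewrite !mulr1; move: hqz; rewrite /r0 /q; lra.
  rewrite maxB3; last first.
  - have := mulr_ge0 hr0 hz1; rewrite /r0; lra.
  - rewrite !mulr0; have := mulr_ge0 hr0 hz1; rewrite /r0; lra.
  rewrite ?mulr1 ?mulr0; rewrite /q; lra.
have hst : stochastic (rzchan z).
  split; first by case; case => /=; lra.
  by case; rewrite big_bool /=; lra.
split; last by split => //; split => //; rewrite hPXZ.
split.
- move=> u [Z [V [hV [hX hY]]]]; rewrite -hY.
  pose lam := r0 / D2.
  have hl : lam * D2 = r0 by rewrite /lam divfK // gt_eqF.
  have hl0 : 0 <= lam by rewrite /lam divr_ge0 // ltW.
  have hlE : 0 <= q - lam * D1.
    apply: (pos_div hD2').
    have : lam * D2 * D1 <= q * D2 by rewrite hl.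
    rewrite mulrBl; lra.
  apply: le_trans (@ub_gen _ _ _ _ lam (- (lam * (p * b))) (q - lam * (p * (1 - b))) hV _) _.
  + move=> x y M hx hy hM0 hM1.
    rewrite /PXY /PXY_bibo /bern /bibo /= in hM0 hM1 *.
    have k1 : 0 <= lam * (M - ((1 - p) * a * y + (1 - p) * (1 - a) * x)) by apply: mulr_ge0 => //; lra.
    have k2 : 0 <= lam * (M - (p * (1 - b) * y + p * b * x)) by apply: mulr_ge0 => //; lra.
    have k3 := mulr_ge0 hlE hy.
    have k4 := mulr_ge0 hq0 hy.
    have k5 : lam * D2 * x = r0 * x by rewrite hl.
    move: k1 k2 k3 k4 k5; rewrite /D1 /D2 /q /r0 => k1 k2 k3 k4 k5.
    rewrite !ge_max; apply/andP; split; last (apply/andP; split); lra.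
  have := ler_wpM2l hl0 hX.
  have : z * r0 = lam * N by rewrite -hl -hz mulrCA.
  move: hl hrq; rewrite /N /D2 /r0 /q => hl hrq.
  lra.
- move=> w hw; apply: hw.
  by exists bool, (rzchan z); split => //; split => //; rewrite hPXZ.
Qed.
Theorem theorem2 (R : realType) (p alpha beta eps : R) :
  2^-1 <= p -> p < 1 ->
  0 <= alpha -> alpha < 2^-1 -> 0 <= beta -> beta < 2^-1 ->
  beta * p < (1 - alpha) * (1 - p) ->
  p <= eps -> eps <= (1 - alpha) * (1 - p) + (1 - beta) * p ->
  let q := alpha * (1 - p) + (1 - beta) * p in
  let zeta := ((1 - alpha) * (1 - p) + (1 - beta) * p - eps)
                / ((1 - beta) * p - alpha * (1 - p)) in
  let zeta' := ((1 - alpha) * (1 - p) + (1 - beta) * p - eps)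
                / ((1 - alpha) * (1 - p) - beta * p) in
  let PXY := PXY_bibo p alpha beta in
  (alpha * (1 - alpha) * (1 - p) ^+ 2 < beta * (1 - beta) * p ^+ 2 ->
     h_is PXY eps (1 - zeta * q) /\
     stochastic (zchan zeta) /\
     Pc_cond (PXZ PXY (zchan zeta)) <= eps /\
     Pc_cond (PYZ PXY (zchan zeta)) = 1 - zeta * q) /\
  (beta * (1 - beta) * p ^+ 2 <= alpha * (1 - alpha) * (1 - p) ^+ 2 ->
     h_is PXY eps (1 - zeta' * (1 - q)) /\
     stochastic (rzchan zeta') /\
     Pc_cond (PXZ PXY (rzchan zeta')) <= eps /\
     Pc_cond (PYZ PXY (rzchan zeta')) = 1 - zeta' * (1 - q)).
Proof.
move=> hp1 hp2 ha1 ha2 hb1 hb2 hD2 he1 he2 q zeta zeta' PXY.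
have h1 : (1 - beta) * p - alpha * (1 - p) != 0 by apply/lt0r_neq0; lra.
have h2 : (1 - alpha) * (1 - p) - beta * p != 0 by apply/lt0r_neq0; lra.
split => hc.
- apply: case1 => //; by rewrite /zeta divfK.
- apply: case2 => //; by rewrite /zeta' divfK.
Qed.
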